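(* Let $X$ be a finite-dimensional simplicial complex satisfying: (1) for all vertices $x,y$ of $X$, $\Sigma_x\subseteq\Sigma_y$ implies $x=y$; (2) if $K$ is a simplex of $X$ and $x$ is a vertex of $X$ with $x\notin K$, then there is a maximal simplex $L$ of $X$ with $K\subseteq L$ and $x\notin L$. Then the map $\Omega\colon\mathrm{Aut}(X)\to\mathrm{Aut}(\mathcal{N}(X))$, $\Omega(\varphi)=\varphi_*$, is surjective.
   Context: For a vertex $x$ of $X$, $\Sigma_x$ is the collection of maximal simplices of $X$ containing $x$. $\mathcal{N}(X)$ is the nerve of the collection of maximal simplices of $X$ (vertices: maximal simplices of $X$; a finite set of them is a simplex iff their common intersection is non-empty). For $\varphi\in\mathrm{Aut}(X)$ (simplicial automorphisms), $\varphi_*$ is the simplicial automorphism of $\mathcal{N}(X)$ given on vertices by $\varphi_*(K)=\varphi(K)$. *)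

(* Defs.v *)
From Stdlib Require Import List.

Definition subset {V : Type} (A B : V -> Prop) : Prop := forall x, A x -> B x.

Definition finite_pred {V : Type} (A : V -> Prop) : Prop :=
  exists l : list V, forall x, A x -> In x l.

Definition nonempty {V : Type} (A : V -> Prop) : Prop := exists x, A x.

Definition image {V W : Type} (f : V -> W) (A : V -> Prop) : W -> Prop :=
  fun w => exists v, A v /\ f v = w.

(* An abstract simplicial complex with vertex set the whole type V:
   simplices are finite nonempty sets, closed under nonempty subsets,
   and every vertex spans a 0-simplex. *)
Definition simplicial_complex {V : Type} (X : (V -> Prop) -> Prop) : Prop :=
  (forall s, X s -> finite_pred s /\ nonempty s) /\
  (forall s t, X s -> subset t s -> nonempty t -> X t) /\
  (forall v : V, X (fun x => x = v)).

Definition finite_dimensional {V : Type} (X : (V -> Prop) -> Prop) : Prop :=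
  exists n : nat, forall s, X s ->
    exists l : list V, length l <= n /\ forall x, s x -> In x l.

Definition maximal_simplex {V : Type} (X : (V -> Prop) -> Prop) (K : V -> Prop) : Prop :=
  X K /\ forall L, X L -> subset K L -> subset L K.

(* Sigma_x : maximal simplices containing x; Sigma_x ⊆ Sigma_y *)
Definition Sigma_sub {V : Type} (X : (V -> Prop) -> Prop) (x y : V) : Prop :=
  forall K, maximal_simplex X K -> K x -> K y.

Definition simplicial_aut {V : Type} (X : (V -> Prop) -> Prop) (f : V -> V) : Prop :=
  (exists g : V -> V, (forall x, g (f x) = x) /\ (forall x, f (g x) = x)) /\
  (forall s, X s <-> X (image f s)).

(* Vertices of the nerve: maximal simplices of X. *)
Definition MaxSimp {V : Type} (X : (V -> Prop) -> Prop) : Type :=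
  { K : V -> Prop | maximal_simplex X K }.

Definition nerve {V : Type} (X : (V -> Prop) -> Prop) : (MaxSimp X -> Prop) -> Prop :=
  fun S => finite_pred S /\ nonempty S /\
           exists v : V, forall K : MaxSimp X, S K -> proj1_sig K v.

(* Main.v *)
Require Import Defs.
From Stdlib Require Import List Classical ClassicalEpsilon Lia PeanoNat Arith.
Import ListNotations.

Definition dec (P : Prop) : bool := if excluded_middle_informative P then true else false.
Definition cnt {V} (P : V -> Prop) (l : list V) : nat := length (filter (fun v => dec (P v)) l).

Lemma cnt_mono {V} (P Q : V -> Prop) l : (forall v, P v -> Q v) -> cnt P l <= cnt Q l.
Proof.
  intros H; induction l as [|a l IH]; [unfold cnt; simpl; lia|].
  unfold cnt, dec in *; simpl.
  destruct (excluded_middle_informative (P a)), (excluded_middle_informative (Q a)); simpl; try lia.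
  exfalso; auto.
Qed.

Lemma cnt_strict {V} (P Q : V -> Prop) l w : (forall v, P v -> Q v) -> In w l -> Q w -> ~ P w -> cnt P l < cnt Q l.
Proof.
  intros H; induction l as [|a l IH]; simpl; [contradiction|].
  intros [->|Hin] Qw Pw.
  - pose proof (cnt_mono P Q l H). unfold cnt, dec in *; simpl.
    destruct (excluded_middle_informative (P w)), (excluded_middle_informative (Q w)); simpl; try lia; contradiction.
  - pose proof (IH Hin Qw Pw). unfold cnt, dec in *; simpl.
    destruct (excluded_middle_informative (P a)), (excluded_middle_informative (Q a)); simpl; try lia.
    exfalso; auto.
Qed.

Lemma in_max {V} (X : (V->Prop)->Prop) :
  (forall (K : V -> Prop) (x : V), X K -> ~ K x -> exists L, maximal_simplex X L /\ subset K L /\ ~ L x) ->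
  forall K, X K -> exists L, maximal_simplex X L /\ subset K L.
Proof.
  intros H2 K HK. destruct (classic (exists x, ~K x)) as [[x Hx]|Hn].
  - destruct (H2 K x HK Hx) as [L [HL [HKL _]]]; eauto.
  - exists K; split; [split; [exact HK|] | intros z; auto].
    intros L _ _ z _. apply NNPP; intro; apply Hn; eauto.
Qed.

Lemma nerve_ext {V} X (S T : MaxSimp X -> Prop) : (forall K, S K <-> T K) -> @nerve V X S -> nerve X T.
Proof.
  intros E [[l Hl] [[K0 HK0] [v Hv]]].
  split; [exists l; intros; apply Hl, E; auto|split; [exists K0; apply E; auto| exists v; intros K HK; apply Hv, E; auto]].
Qed.

Lemma common {V} (X : (V->Prop)->Prop) (HX : simplicial_complex X)
  (H2 : forall (K : V -> Prop) (x : V), X K -> ~ K x -> exists L, maximal_simplex X L /\ subset K L /\ ~ L x)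
  (f : MaxSimp X -> MaxSimp X) (Hf : forall S, nerve X S -> nerve X (image f S)) (x : V) :
  exists y, forall K : MaxSimp X, proj1_sig K x -> proj1_sig (f K) y.
Proof.
  destruct HX as [Hfin [Hcl Hpt]].
  destruct (in_max X H2 _ (Hpt x)) as [L0 [HL0 HsubL0]].
  set (K0 := exist _ L0 HL0 : MaxSimp X).
  assert (HK0x : proj1_sig K0 x) by (apply HsubL0; reflexivity).
  destruct (Hfin _ (proj1 (proj2_sig (f K0)))) as [[l0 Hl0] _].
  set (I := fun (Fs : list (MaxSimp X)) (v:V) => forall K, In K Fs -> proj1_sig (f K) v).
  assert (Hne : forall Fs, In K0 Fs -> (forall K, In K Fs -> proj1_sig K x) -> exists v, I Fs v).
  { intros Fs Hin Hall. assert (HN : nerve X (fun K => In K Fs)).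
    { split; [exists Fs; auto | split; [exists K0; auto | exists x; auto]]. }
    destruct (Hf _ HN) as [_ [_ [v Hv]]]. exists v. intros K HK. apply Hv. exists K; auto. }
  assert (Main : forall c Fs, cnt (I Fs) l0 <= c -> In K0 Fs -> (forall K, In K Fs -> proj1_sig K x) ->
     exists y, forall K, proj1_sig K x -> proj1_sig (f K) y).
  { induction c as [c IH] using lt_wf_ind. intros Fs Hc Hin Hall.
    destruct (classic (exists K w, proj1_sig K x /\ I Fs w /\ ~ proj1_sig (f K) w)) as [[K [w [HKx [HIw Hnw]]]]|Hno].
    - apply (IH (cnt (I (K :: Fs)) l0)) with (Fs := K :: Fs).
      + eapply Nat.lt_le_trans; [|exact Hc]. apply cnt_strict with w.
        * intros v Hv K' HK'. apply Hv; simpl; auto.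
        * apply Hl0, HIw, Hin.
        * exact HIw.
        * intros Hc'; apply Hnw, Hc'; simpl; auto.
      + lia.
      + simpl; auto.
      + intros K' [<-|HK']; auto.
    - destruct (Hne Fs Hin Hall) as [y Hy]. exists y. intros K HK. apply NNPP; intro Hn. apply Hno. exists K, y; auto. }
  apply (Main _ [K0] (le_n _)); simpl; auto. intros K [<-|[]]; auto.
Qed.

Theorem proposition3p9 (V : Type) (X : (V -> Prop) -> Prop) :
  simplicial_complex X ->
  finite_dimensional X ->
  (forall x y : V, Sigma_sub X x y -> x = y) ->
  (forall (K : V -> Prop) (x : V), X K -> ~ K x ->
     exists L, maximal_simplex X L /\ subset K L /\ ~ L x) ->
  forall psi : MaxSimp X -> MaxSimp X,
    simplicial_aut (nerve X) psi ->
    exists phi : V -> V,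
      simplicial_aut X phi /\
      forall K : MaxSimp X, forall v : V,
        proj1_sig (psi K) v <-> image phi (proj1_sig K) v.
Proof.
  intros HX Hfd H1 H2 psi [[g [Hgp Hpg]] Hpsi].
  assert (Hg : forall S, nerve X S -> nerve X (image g S)).
  { intros S HS. apply Hpsi. eapply nerve_ext; [|exact HS]. intros K; split.
    - intros HK. exists (g K). split; [exists K; auto | apply Hpg].
    - intros [v [[u [Hu <-]] <-]]. rewrite Hpg; exact Hu. }
  assert (Hp : forall S, nerve X S -> nerve X (image psi S)) by (intros S HS; exact (proj1 (Hpsi S) HS)).
  pose proof (common X HX H2 psi Hp) as Cp. pose proof (common X HX H2 g Hg) as Cg.
  assert (Ephi : exists phi : V -> V, forall x K, proj1_sig K x -> proj1_sig (psi K) (phi x)).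
  { exists (fun x => proj1_sig (constructive_indefinite_description _ (Cp x))).
    intros x; exact (proj2_sig (constructive_indefinite_description _ (Cp x))). }
  assert (Egam : exists gam : V -> V, forall x K, proj1_sig K x -> proj1_sig (g K) (gam x)).
  { exists (fun x => proj1_sig (constructive_indefinite_description _ (Cg x))).
    intros x; exact (proj2_sig (constructive_indefinite_description _ (Cg x))). }
  destruct Ephi as [phi Hphi]. destruct Egam as [gam Hgam].
  assert (SL : forall x y, (forall K : MaxSimp X, proj1_sig K x -> proj1_sig K y) -> x = y).
  { intros x y H. apply H1. intros K HK Kx. exact (H (exist _ K HK) Kx). }
  assert (E1 : forall x, gam (phi x) = x).
  { intros x. symmetry. apply SL. intros K Kx. rewrite <- (Hgp K). apply Hgam, Hphi, Kx. }
  assert (E2 : forall y, phi (gam y) = y).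
  { intros y. symmetry. apply SL. intros K Kx. rewrite <- (Hpg K). apply Hphi, Hgam, Kx. }
  assert (key : forall K v, proj1_sig K v <-> proj1_sig (psi K) (phi v)).
  { intros K v; split; [apply Hphi|]. intro H. rewrite <- (Hgp K), <- (E1 v). apply Hgam; exact H. }
  exists phi. split.
  - split; [exists gam; split; auto|].
    destruct HX as [Hfin [Hcl Hpt]].
    intros s. split.
    + intros Hs. destruct (in_max X H2 s Hs) as [L [HL HsL]].
      apply (Hcl (proj1_sig (psi (exist _ L HL)))).
      * exact (proj1 (proj2_sig (psi (exist _ L HL)))).
      * intros w [v [Hv <-]]. apply (proj1 (key _ _)). simpl. apply HsL; auto.
      * destruct (proj2 (Hfin s Hs)) as [v Hv]; exists (phi v); exists v; auto.
    + intros Hs. destruct (in_max X H2 _ Hs) as [M [HM HsM]].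
      set (k := g (exist _ M HM)).
      apply (Hcl (proj1_sig k)).
      * exact (proj1 (proj2_sig k)).
      * intros v Hv. apply (proj2 (key _ _)). unfold k; rewrite Hpg. simpl. apply HsM. exists v; auto.
      * destruct (proj2 (Hfin _ Hs)) as [w [v [Hv _]]]; exists v; auto.
  - intros K v. split.
    + intro H. exists (gam v). split; [apply (proj2 (key _ _)); rewrite E2; exact H | apply E2].
    + intros [u [Hu <-]]. apply (proj1 (key _ _)); auto.
Qed.
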